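(* Let $U$ be a reflexive separable Banach space, let $\xi\sim\mathcal N(0,\Sigma)$ be a centered $m$-dimensional Gaussian random vector with covariance matrix $\Sigma$, and let $g\colon U\times\mathbb R^m\to\mathbb R$ be locally Lipschitzian and jointly convex in both variables $(u,z)$. Let $\bar u\in U$ satisfy $g(\bar u,0)<0$ and assume that the set $M:=\{z\in\mathbb R^m\mid g(\bar u,z)\le 0\}$ is bounded. Let $\mathcal N(\bar u)$ be an open neighborhood of $\bar u$ such that $g(u,0)<0$ for all $u\in\mathcal N(\bar u)$. Then for each $v\in\mathbb S^{m-1}$ the function $u\mapsto -e(u,v)$ is Clarke regular on $\mathcal N(\bar u)$, where $e$ is the radial probability function defined below.
   Context: $\Sigma^{1/2}$ denotes a root of $\Sigma$. The radial probability function $e\colon U\times\mathbb S^{m-1}\to\mathbb R$ is $e(u,v):=\mu_\eta\{r\ge 0\mid g(u,r\Sigma^{1/2}v)\le 0\}$, where $\mu_\eta$ is the one-dimensional chi distribution with $m$ degrees of freedom and $\mathbb S^{m-1}$ is the unit sphere in $\mathbb R^m$. A locally Lipschitzian function is Clarke regular at a point if for every direction its ordinary directional derivative exists there and coincides with its Clarke generalized directional derivative; it is Clarke regular on a set if it is so at each point of the set. *)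

(* Defs.v *)
From HB Require Import structures.
From mathcomp Require Import all_boot all_order all_algebra.
From mathcomp Require Import all_classical all_reals all_analysis.
Set Implicit Arguments. Unset Strict Implicit. Unset Printing Implicit Defensive.
Import Order.TTheory GRing.Theory Num.Theory.
Import numFieldNormedType.Exports.
Local Open Scope classical_set_scope.
Local Open Scope ring_scope.

Section Defs.
Variable R : realType.

Definition separable_space (U : normedModType R) : Prop :=
  exists D : set U, countable D /\ (forall (u : U) (e : R), 0 < e ->
    exists2 d, D d & `|u - d| < e).

Definition cont_lin_functional (U : normedModType R) (phi : U -> R) : Prop :=
  (forall (a : R) (x y : U), phi (a *: x + y) = a * phi x + phi y) /\
  continuous phi.

(* Reflexivity: every bounded linear functional Phi on the dual U^*
   (equipped with the operator norm) is the evaluation at some u in U.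
   "K bounds phi in operator norm" is written |phi u| <= K |u| for all u. *)
Definition reflexive_space (U : normedModType R) : Prop :=
  forall Phi : (U -> R) -> R,
    (forall (a : R) (phi psi : U -> R), cont_lin_functional phi ->
       cont_lin_functional psi ->
       Phi (fun x => a * phi x + psi x) = a * Phi phi + Phi psi) ->
    (exists C : R, forall (phi : U -> R) (K : R), cont_lin_functional phi ->
       (forall u, `|phi u| <= K * `|u|) -> `|Phi phi| <= C * K) ->
    exists u : U, forall phi, cont_lin_functional phi -> Phi phi = phi u.

Definition locally_lipschitz2 (U V : normedModType R) (g : U -> V -> R) :=
  forall (u0 : U) (z0 : V), exists2 e : R, 0 < e & exists K : R,
    forall u1 u2 z1 z2, `|u1 - u0| < e -> `|u2 - u0| < e ->
      `|z1 - z0| < e -> `|z2 - z0| < e ->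
      `|g u1 z1 - g u2 z2| <= K * (`|u1 - u2| + `|z1 - z2|).

Definition jointly_convex (U V : normedModType R) (g : U -> V -> R) :=
  forall (u1 u2 : U) (z1 z2 : V) (t : R), 0 <= t <= 1 ->
    g (t *: u1 + (1 - t) *: u2) (t *: z1 + (1 - t) *: z2)
      <= t * g u1 z1 + (1 - t) * g u2 z2.

Definition unit_sphere (m : nat) : set 'cV[R]_m :=
  [set v | \sum_(i < m) (v i 0) ^+ 2 = 1].

Definition chi_density (m : nat) (r : R) : R :=
  r ^+ m.-1 * expR (- (r ^+ 2) / 2).

Definition chi_prob (m : nat) (A : set R) : R :=
  fine (\int[lebesgue_measure]_(r in A `&` [set r | 0 <= r]) (chi_density m r)%:E)
  / fine (\int[lebesgue_measure]_(r in [set r : R | 0 <= r]) (chi_density m r)%:E).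

(* radial probability function e(u,v) = mu_eta {r >= 0 | g(u, r Sigma^{1/2} v) <= 0},
   where L plays the role of the root Sigma^{1/2} (Sigma = L L^T) *)
Definition radial_prob (U : normedModType R) (m : nat) (L : 'M[R]_m)
    (g : U -> 'cV[R]_m -> R) (u : U) (v : 'cV[R]_m) : R :=
  chi_prob m [set r | 0 <= r /\ g u (r *: (L *m v)) <= 0].

Definition lipschitz_near (U : normedModType R) (f : U -> R) (x : U) :=
  exists2 e : R, 0 < e & exists K : R, forall y1 y2,
    `|y1 - x| < e -> `|y2 - x| < e -> `|f y1 - f y2| <= K * `|y1 - y2|.

(* Clarke generalised directional derivative
   f°(x; h) = limsup_{y -> x, t downarrow 0} (f(y + t h) - f y) / t *)
Definition clarke_dd (U : normedModType R) (f : U -> R) (x h : U) : \bar R :=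
  ereal_inf [set ereal_sup
               [set ((f (yt.1 + yt.2 *: h) - f yt.1) / yt.2)%:E
               | yt in [set yt : U * R | `|yt.1 - x| < d /\ 0 < yt.2 < d]]
            | d in [set d : R | 0 < d]].

Definition clarke_regular_at (U : normedModType R) (f : U -> R) (x : U) :=
  lipschitz_near f x /\
  forall h : U, exists d : R,
    ((fun t : R => (f (x + t *: h) - f x) / t) @ 0^'+ --> d) /\
    clarke_dd f x h = d%:E.

Definition clarke_regular_on (U : normedModType R) (f : U -> R) (N : set U) :=
  forall x, N x -> clarke_regular_at f x.

End Defs.

(* Main.v *)
Require Import Defs.
From HB Require Import structures.
From mathcomp Require Import all_boot all_order all_algebra.
From mathcomp Require Import all_classical all_reals all_analysis.
From mathcomp Require Import ring lra.
Import Order.TTheory GRing.Theory Num.Theory.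
Import numFieldNormedType.Exports.
Local Open Scope classical_set_scope.
Local Open Scope ring_scope.
Section G.
Variable R : realType.
Notation mu := (@lebesgue_measure R).

Lemma chi_density_cont (m : nat) : continuous (@chi_density R m).
Proof.
move=> x; rewrite /chi_density.
apply: cvgM; first exact: exprn_continuous.
apply: continuous_comp; last exact: continuous_expR.
apply: cvgM; last exact: cvg_cst.
apply: cvgN; exact: exprn_continuous.
Qed.

Definition Gf (m : nat) (x : R) : R :=
  fine (\int[mu]_(r in [set` `[0, x]]) (chi_density m r)%:E).

Lemma Gf_derive (m : nat) (x : R) : 0 < x ->
  derivable (Gf m) x 1 /\ derive1 (Gf m) x = chi_density m x.
Proof.
move=> x0.
have := @continuous_FTC1_closed R (@chi_density R m) 0 x (x + 1).
apply => //.
- lra.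
- apply: continuous_compact_integrable; first exact: segment_compact.
  apply: continuous_subspaceT => y; exact: chi_density_cont.
- exact: chi_density_cont.
Qed.

Lemma Gf_mvt (m : nat) (p q : R) : 0 < p -> p <= q ->
  exists2 c, p <= c <= q & Gf m q - Gf m p = chi_density m c * (q - p).
Proof.
move=> p0 pq.
have h1 : forall y, y \in `]p, q[ -> is_derive y 1 (Gf m) (chi_density m y).
  move=> y; rewrite in_itv /= => /andP[py yq].
  have [d dE] := @Gf_derive m y (lt_trans p0 py).
  rewrite -dE derive1E; exact: derivableP.
have h2 : {within `[p, q], continuous (Gf m)}.
  apply: derivable_within_continuous => y; rewrite in_itv /= => /andP[py yq].
  exact: (@Gf_derive m y (lt_le_trans p0 py)).1.
have [c cI E] := @MVT_segment R (Gf m) (@chi_density R m) p q pq h1 h2.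
by exists c => //; move: cI; rewrite in_itv.
Qed.
End G.
Section E1s.
Variable R : realType.
Lemma E1 (F : R -> R) (l : R) :
  (forall e, 0 < e -> exists2 g, 0 < g & forall t, 0 < t -> t < g -> `|F t - l| <= e) ->
  F @ 0^'+ --> l.
Proof.
move=> H; apply/cvgrPdist_le => e e0.
have [g g0 Hg] := H e e0.
exists g => // t /= tg t0.
rewrite distrC; apply: Hg => //.
move: tg; rewrite sub0r normrN gtr0_norm //.
Qed.
End E1s.

Section E2s.
Variables (R : realType) (U : normedModType R).
Lemma E2 (f : U -> R) (x k : U) (l : R) :
  (forall d e, 0 < d -> 0 < e -> exists2 t, 0 < t < d &
       l - e <= (f (x + t *: k) - f x) / t) ->
  (forall e, 0 < e -> exists2 d, 0 < d & forall y t, `|y - x| < d -> 0 < t < d ->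
       (f (y + t *: k) - f y) / t <= l + e) ->
  clarke_dd f x k = l%:E.
Proof.
move=> Hlo Hup; apply/eqP; rewrite eq_le; apply/andP; split.
- apply/lee_addgt0Pr => e e0.
  have [d d0 Hd] := Hup e e0.
  apply: (@le_trans _ _ (ereal_sup [set ((f (yt.1 + yt.2 *: k) - f yt.1) / yt.2)%:E
               | yt in [set yt : U * R | `|yt.1 - x| < d /\ 0 < yt.2 < d]])).
    by apply: ereal_inf_lbound; exists d.
  apply: ge_ereal_sup => _ [[y t] /= [yd td] <-].
  rewrite -EFinD lee_fin; exact: Hd.
- apply: le_ereal_inf_tmp => _ [d /= d0 <-].
  apply/lee_addgt0Pr => e e0.
  have [t td Ht] := Hlo d e d0 e0.
  apply: (@le_trans _ _ (((f (x + t *: k) - f x) / t)%:E + e%:E)).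
    by rewrite -EFinD lee_fin -lerBlDr.
  rewrite leeD2r //; apply: ereal_sup_ubound; exists (x, t) => //=.
  by rewrite subrr normr0.
Qed.
End E2s.

Section ClarkeComp.
Variables (R : realType) (U : normedModType R).
Variables (f h : U -> R) (Phi D : R -> R) (x : U) (dl eta K : R).
Hypotheses (dl0 : 0 < dl) (eta0 : 0 < eta) (K0 : 0 <= K).
Hypothesis Hf : forall y, `|y - x| < dl -> f y = Phi (h y).
Hypothesis Hconv : forall y1 y2 t, `|y1 - x| < dl -> `|y2 - x| < dl -> 0 <= t <= 1 ->
  h (t *: y1 + (1 - t) *: y2) <= t * h y1 + (1 - t) * h y2.
Hypothesis Hlip : forall y1 y2, `|y1 - x| < dl -> `|y2 - x| < dl ->
  `|h y1 - h y2| <= K * `|y1 - y2|.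
Hypothesis Hmvt : forall a b, `|a - h x| < eta -> `|b - h x| < eta ->
  exists xi, ((a <= xi <= b) \/ (b <= xi <= a)) /\ Phi b - Phi a = D xi * (b - a).
Hypothesis Hcont : forall e, 0 < e -> exists2 g, 0 < g &
  forall xi, `|xi - h x| < g -> `|D xi - D (h x)| < e.
Hypothesis HD0 : 0 <= D (h x).

Let c0 := D (h x).
Ltac sh := move: (K0) (dl0) (eta0) (HD0 : 0 <= c0) => ? ? ? ?.

Lemma Lphi e : 0 < e -> exists2 tau, 0 < tau & forall a b, `|a - h x| < tau ->
  `|b - h x| < tau -> exists Dv, `|Dv - c0| < e /\ Phi b - Phi a = Dv * (b - a).
Proof.
move=> e0; sh; have [g g0 Hg] := Hcont _ e0.
exists (Num.min g eta); first by rewrite lt_min g0 eta0.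
move=> a b; rewrite !lt_min => /andP[ag ae] /andP[bg be].
have [xi [Hxi E]] := Hmvt _ _ ae be.
exists (D xi); split => //; apply: Hg.
move: ag bg; rewrite !ltr_distl => /andP[? ?] /andP[? ?].
by apply/andP; case: Hxi => /andP[? ?]; split; lra.
Qed.

Lemma hnear z : `|z - x| < dl -> `|h z - h x| <= K * `|z - x|.
Proof. by move=> zx; apply: Hlip => //; rewrite subrr normr0. Qed.

Lemma Lnear (k : U) tau : 0 < tau -> exists2 r, 0 < r & forall y t, `|y - x| < r ->
  0 <= t -> t < r -> [/\ `|y - x| < dl, `|y + t *: k - x| < dl,
    `|h y - h x| < tau & `|h (y + t *: k) - h x| < tau].
Proof.
move=> tau0; sh.
set M := Num.min dl (tau / (K + 1)).
have M0 : 0 < M.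
  rewrite lt_min dl0 /=; apply: divr_gt0 => //; sh; lra.
have Mdl : M <= dl by rewrite ge_min lexx.
have Mtau : K * M < tau.
  apply: (@le_lt_trans _ _ (K * (tau / (K + 1)))).
    by apply: ler_wpM2l => //; rewrite ge_min lexx orbT.
  rewrite mulrA ltr_pdivrMr; last lra.
  nra.
have nk0 : 0 <= `|k| by [].
exists (M / (`|k| + 1)); first by rewrite divr_gt0 //; lra.
move=> y t yr t0 tr.
have rM : M / (`|k| + 1) <= M.
  by rewrite ler_pdivrMr ?ler_peMr //; lra.
have yM : `|y - x| < M by exact: lt_le_trans yr rM.
have ytM : `|y + t *: k - x| < M.
  rewrite addrAC; apply: (le_lt_trans (ler_normD _ _)).
  rewrite normrZ ger0_norm //.
  have : t * `|k| <= M / (`|k| + 1) * `|k| by apply: ler_wpM2r => //; exact: ltW.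
  have : M / (`|k| + 1) * `|k| + M / (`|k| + 1) = M.
    by field; apply: lt0r_neq0; lra.
  lra.
have hz z : `|z - x| < M -> `|h z - h x| < tau.
  move=> zM; apply: (le_lt_trans (hnear _ (lt_le_trans zM Mdl))).
  apply: le_lt_trans Mtau; apply: ler_wpM2l => //; exact: ltW.
split; [exact: lt_le_trans yM Mdl|exact: lt_le_trans ytM Mdl|exact: hz|exact: hz].
Qed.

Lemma Lmono (k y : U) t s : `|y - x| < dl -> `|y + s *: k - x| < dl -> 0 < t -> t <= s ->
  (h (y + t *: k) - h y) / t <= (h (y + s *: k) - h y) / s.
Proof.
move=> yx ysx t0 ts.
have s0 : 0 < s by exact: lt_le_trans t0 ts.
have u01 : 0 <= t / s <= 1.
  by apply/andP; split; [rewrite divr_ge0 // ltW|rewrite ler_pdivrMr // mul1r].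
have := Hconv _ _ _ ysx yx u01.
have -> : t / s *: (y + s *: k) + (1 - t / s) *: y = y + t *: k.
  rewrite scalerDr scalerA divfK ?gt_eqF // scalerBl scale1r.
  by rewrite addrC addrA subrK.
move=> H.
rewrite ler_pdivrMr //.
have -> : (h (y + s *: k) - h y) / s * t = t / s * (h (y + s *: k) - h y).
  by ring.
move: H; set u := t / s; set A := h (y + t *: k); set B := h (y + s *: k); set C := h y.
move=> H; nra.
Qed.


Lemma lip_f : lipschitz_near f x.
Proof.
have [tau tau0 Ht] := @Lphi 1 ltr01.
have [r r0 Hr] := Lnear 0 _ tau0.
exists r => //; exists ((c0 + 1) * K) => y1 y2 y1r y2r.
have [y1d _ h1 _] := Hr y1 0 y1r (lexx 0) r0.
have [y2d _ h2 _] := Hr y2 0 y2r (lexx 0) r0.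
rewrite (Hf _ y1d) (Hf _ y2d).
have [Dv [HDv E]] := Ht _ _ h2 h1.
rewrite E normrM -mulrA.
have HDv' : `|Dv| <= c0 + 1.
  move: HDv; rewrite ltr_distl => /andP[? ?].
  rewrite ler_norml; apply/andP; split; sh; lra.
apply: ler_pM => //; first exact: Hlip.
Qed.

Section Dir.
Variable k : U.

Let Q y t := (h (y + t *: k) - h y) / t.
Let P y t := (f (y + t *: k) - f y) / t.

Lemma Qbound y t : `|y - x| < dl -> `|y + t *: k - x| < dl -> 0 < t ->
  `|Q y t| <= K * `|k|.
Proof.
move=> y1 y2 t0; rewrite /Q normrM normfV (gtr0_norm t0) ler_pdivrMr //.
apply: (le_trans (Hlip _ _ y2 y1)).
by rewrite addrC addKr normrZ (gtr0_norm t0) mulrA mulrAC.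
Qed.

Lemma Ldecomp e : 0 < e -> exists2 r, 0 < r & forall y t, `|y - x| < r -> 0 < t -> t < r ->
  [/\ `|P y t - c0 * Q y t| <= e * (K * `|k|), `|y - x| < dl & `|y + t *: k - x| < dl].
Proof.
move=> e0; have [tau tau0 Ht] := Lphi _ e0.
have [r r0 Hr] := Lnear k _ tau0.
exists r => // y t yr t0 tr.
have [y1 y2 h1 h2] := Hr y t yr (ltW t0) tr.
split => //.
have [Dv [HDv E]] := Ht _ _ h1 h2.
have -> : P y t - c0 * Q y t = (Dv - c0) * Q y t.
  by rewrite /P /Q (Hf _ y1) (Hf _ y2) E; ring.
rewrite normrM; apply: ler_pM => //; first exact: ltW.
exact: Qbound.
Qed.

Let t0 := dl / (`|k| + 1).
Let t0_gt0 : 0 < t0.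
Proof. by rewrite divr_gt0 //; move: (normr_ge0 k) => ?; lra. Qed.

Let ball_t t : 0 <= t -> t < t0 -> `|x + t *: k - x| < dl.
Proof.
move=> tge ttl; rewrite addrC addKr normrZ ger0_norm //.
move: ttl; rewrite /t0 ltr_pdivlMr; last by move: (normr_ge0 k) => ?; lra.
move: (normr_ge0 k) => ?; nra.
Qed.

Let Sq := [set Q x t | t in [set t | 0 < t < t0]].
Let dh := inf Sq.

Let xx : `|x - x| < dl.
Proof. by rewrite subrr normr0. Qed.

Let Sq_inf : has_inf Sq.
Proof.
split.
  exists (Q x (t0 / 2)), (t0 / 2) => //=; apply/andP; split; move: t0_gt0 => ?; lra.
exists (- (K * `|k|)) => _ [t /andP[ta tb] <-].
have := @Qbound x t xx (ball_t _ (ltW ta) tb) ta.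
by rewrite ler_norml => /andP[].
Qed.

Let dh_le t : 0 < t -> t < t0 -> dh <= Q x t.
Proof.
move=> ta tb; apply: (ge_inf Sq_inf.2); exists t => //; exact/andP.
Qed.

Let dh_adh e : 0 < e -> exists2 s, 0 < s < t0 & Q x s < dh + e.
Proof.
move=> e0; have [_ [s ss <-] Hs] := inf_adherent e0 Sq_inf.
by exists s.
Qed.

Let lim_q e : 0 < e -> exists2 g, 0 < g & forall t, 0 < t -> t < g -> `|Q x t - dh| <= e.
Proof.
move=> e0; have [s /andP[s0 st0] Hs] := dh_adh _ e0.
exists s => // t ta ts.
have tt0 : t < t0 by exact: lt_trans ts st0.
have := dh_le _ ta tt0.
have := @Lmono k x t s xx (ball_t _ (ltW s0) st0) ta (ltW ts).
rewrite -/(Q x t) -/(Q x s) => ? ?.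
rewrite ler_norml; apply/andP; split; lra.
Qed.

Lemma lim_P e : 0 < e -> exists2 g, 0 < g & forall t, 0 < t -> t < g ->
  `|P x t - c0 * dh| <= e.
Proof.
move=> e0; sh.
have kk : 0 <= K * `|k| by apply: mulr_ge0.
set e1 := e / (K * `|k| + c0 + 1).
have e10 : 0 < e1 by apply: divr_gt0 => //; lra.
have [r r0 Hr] := Ldecomp _ e10.
have [g g0 Hg] := lim_q _ e10.
exists (Num.min r g); first by rewrite lt_min r0 g0.
move=> t ta; rewrite lt_min => /andP[tr tg].
have xr : `|x - x| < r by rewrite subrr normr0.
have [H1 _ _] := Hr x t xr ta tr.
have H2 := Hg t ta tg.
have -> : P x t - c0 * dh = (P x t - c0 * Q x t) + c0 * (Q x t - dh) by ring.
apply: (le_trans (ler_normD _ _)).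
rewrite normrM (ger0_norm (HD0 : 0 <= c0)).
have H3 : c0 * `|Q x t - dh| <= c0 * e1 by apply: ler_wpM2l.
have : e1 * (K * `|k|) + c0 * e1 = e1 * (K * `|k| + c0 + 1) - e1 by ring.
have -> : e1 * (K * `|k| + c0 + 1) = e by rewrite /e1 divfK //; apply: lt0r_neq0; lra.
lra.
Qed.

Lemma upper e : 0 < e -> exists2 d, 0 < d & forall y t, `|y - x| < d -> 0 < t < d ->
  P y t <= c0 * dh + e.
Proof.
move=> e0; sh.
have kk : 0 <= K * `|k| by apply: mulr_ge0.
set e1 := e / (2 * c0 + K * `|k| + 1).
have e10 : 0 < e1 by apply: divr_gt0 => //; lra.
have [s /andP[s0 st0] Hs] := dh_adh _ e10.
have [r r0 Hr] := Ldecomp _ e10.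
have skd : s * `|k| < dl.
  move: st0; rewrite /t0 ltr_pdivlMr; last by move: (normr_ge0 k) => ?; lra.
  move: (normr_ge0 k) => ?; nra.
set d := Num.min (Num.min r s) (Num.min ((dl - s * `|k|) / 2) (e1 * s / (2 * K + 1))).
have d0 : 0 < d.
  rewrite !lt_min r0 s0 /=; apply/andP; split; apply: divr_gt0; try lra.
  exact: mulr_gt0.
exists d => // y t yd /andP[ta td].
move: yd td; rewrite !lt_min => /andP[/andP[yr ys] /andP[yd1 yd2]] /andP[/andP[tr ts] _].
have [H1 ydl ytl] := Hr y t yr ta tr.
have ysl : `|y + s *: k - x| < dl.
  rewrite addrAC; apply: (le_lt_trans (ler_normD _ _)).
  rewrite normrZ (gtr0_norm s0); lra.
have Hm := @Lmono k y t s ydl ysl ta (ltW ts).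
rewrite -/(Q y t) -/(Q y s) in Hm.
have Hys : Q y s <= Q x s + e1.
  have E : Q y s - Q x s = ((h (y + s *: k) - h (x + s *: k)) - (h y - h x)) / s.
    by rewrite /Q; field; apply: lt0r_neq0.
  have B1 : `|h (y + s *: k) - h (x + s *: k)| <= K * `|y - x|.
    have -> : y - x = (y + s *: k) - (x + s *: k) by rewrite opprD addrACA subrr addr0.
    apply: Hlip => //; exact: ball_t _ (ltW s0) st0.
  have B2 : `|h y - h x| <= K * `|y - x| by apply: Hlip.
  have B3 : K * `|y - x| <= K * (e1 * s / (2 * K + 1)) by apply: ler_wpM2l => //; exact: ltW.
  have B4 : K * (e1 * s / (2 * K + 1)) * 2 <= e1 * s.
    have a0 : 0 <= e1 * s / (2 * K + 1) by apply: divr_ge0; [apply: mulr_ge0; lra|lra].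
    have Ea : e1 * s = e1 * s / (2 * K + 1) * (2 * K + 1).
      by rewrite divfK //; apply: lt0r_neq0; lra.
    move: a0 Ea; set a := e1 * s / (2 * K + 1) => a0 ->; nra.
  have : Q y s - Q x s <= e1.
    rewrite E ler_pdivrMr //.
    move: B1 B2; rewrite !ler_norml => /andP[? ?] /andP[? ?].
    rewrite mulrC; lra.
  lra.
have HQ : Q y t <= dh + 2 * e1 by lra.
have : P y t <= c0 * Q y t + e1 * (K * `|k|).
  by move: H1; rewrite ler_norml => /andP[_ ?]; lra.
have : c0 * Q y t <= c0 * (dh + 2 * e1) by apply: ler_wpM2l.
have : e1 * (2 * c0 + K * `|k| + 1) = e by rewrite /e1 divfK //; apply: lt0r_neq0; lra.
move=> ? ? ?; nra.
Qed.

Lemma dir_ok : exists d : R,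
    ((fun t : R => (f (x + t *: k) - f x) / t) @ 0^'+ --> d) /\
    clarke_dd f x k = d%:E.
Proof.
exists (c0 * dh); split.
  apply: E1 => e e0; have [g g0 Hg] := lim_P _ e0.
  by exists g.
apply: E2; last exact: upper.
move=> d e d0 e0; have [g g0 Hg] := lim_P _ e0.
exists (Num.min d g / 2).
  apply/andP; split; first by apply: divr_gt0 => //; rewrite lt_min d0 g0.
  have : Num.min d g <= d by rewrite ge_min lexx.
  have : 0 < Num.min d g by rewrite lt_min d0 g0.
  lra.
have := Hg (Num.min d g / 2).
have : Num.min d g <= g by rewrite ge_min lexx orbT.
have : 0 < Num.min d g by rewrite lt_min d0 g0.
move=> ? ? H; have := H ltac:(lra) ltac:(lra).
rewrite ler_norml => /andP[? ?]; rewrite -/(P x _); lra.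
Qed.

End Dir.

Lemma clarke_comp : clarke_regular_at f x.
Proof.
split; first exact: lip_f.
exact: dir_ok.
Qed.
End ClarkeComp.
Section B.
Variables (R : realType) (U : normedModType R).

Lemma vec_id1 (l c : R) (y1 y2 : U) : l * c = 1 - l ->
  l *: (y2 + c *: (y2 - y1)) + (1 - l) *: y1 = y2.
Proof.
move=> E; rewrite scalerDr scalerA E scalerBr.
rewrite -addrA subrK -scalerDl.
by rewrite addrC subrK scale1r.
Qed.

Lemma vec_mid (x y : U) : (1 / 2 : R) *: y + (1 - 1 / 2) *: (x + (x - y)) = x.
Proof.
have -> : (1 - 1 / 2 : R) = 1 / 2 by field.
rewrite -scalerDr [y + _]addrC -addrA subrK -mulr2n -scalerMnr scalerMnl.
have -> : (1 / 2 : R) *+ 2 = 1 by rewrite -mulr_natr; field.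
by rewrite scale1r.
Qed.

Definition convex_on_ball (h : U -> R) (x : U) (dl : R) :=
  forall y1 y2 (t : R), `|y1 - x| < dl -> `|y2 - x| < dl -> 0 <= t <= 1 ->
  h (t *: y1 + (1 - t) *: y2) <= t * h y1 + (1 - t) * h y2.

Lemma conv_lb (h : U -> R) x dl M : convex_on_ball h x dl ->
  (forall y, `|y - x| < dl -> h y <= M) ->
  forall y, `|y - x| < dl -> 2 * h x - M <= h y.
Proof.
move=> Hc HM y yx.
have y'x : `|x + (x - y) - x| < dl by rewrite addrC addKr distrC.
have t01 : 0 <= (1 / 2 : R) <= 1 by rewrite divr_ge0 //= ler_pdivrMr // mul1r ler1n.
have := Hc _ _ _ yx y'x t01.
rewrite vec_mid => H.
have := HM _ y'x.
lra.
Qed.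

Lemma conv_lip1 (h : U -> R) x dl M : 0 < dl -> convex_on_ball h x dl ->
  (forall y, `|y - x| < dl -> h y <= M) ->
  forall y1 y2, `|y1 - x| < dl / 2 -> `|y2 - x| < dl / 2 ->
  h y2 - h y1 <= 4 * (M - h x) / dl * `|y2 - y1|.
Proof.
move=> dl0 Hc HM y1 y2 y1x y2x.
have hd : dl / 2 < dl by lra.
have y1d := lt_trans y1x hd.
have y2d := lt_trans y2x hd.
have Mx : h x <= M by apply: HM; rewrite subrr normr0.
have lb := @conv_lb h x dl M Hc HM _ y1d.
have [->|ne] := eqVneq y2 y1.
  by rewrite !subrr normr0 mulr0.
set n := `|y2 - y1|.
have n0 : 0 < n by rewrite normr_gt0 subr_eq0.
set r := dl / 2.
have r0 : 0 < r by rewrite /r; lra.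
set c := r / n.
set l := n / (n + r).
have lc : l * c = 1 - l by rewrite /l /c; field; apply/andP; split; apply: lt0r_neq0; lra.
set z := y2 + c *: (y2 - y1).
have zx : `|z - x| < dl.
  rewrite /z addrAC; apply: (le_lt_trans (ler_normD _ _)).
  rewrite normrZ (gtr0_norm (divr_gt0 r0 n0)) -/n /c divfK ?gt_eqF //.
  rewrite /r; lra.
have l01 : 0 <= l <= 1.
  apply/andP; split; first by apply: divr_ge0; lra.
  by rewrite /l ler_pdivrMr ?mul1r; lra.
have := Hc _ _ _ zx y1d l01.
rewrite /z vec_id1 // => H.
have Hz := HM _ zx.
have lnr : l <= n / r.
  rewrite /l; apply: ler_wpM2l; first lra.
  by rewrite lef_pV2 ?posrE; lra.
have W0 : 0 <= 2 * (M - h x) by lra.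
have step1 : h y2 - h y1 <= l * (2 * (M - h x)).
  have : l * (h z - h y1) <= l * (2 * (M - h x)) by apply: ler_wpM2l; lra.
  move: l01 => /andP[? ?]; nra.
apply: (le_trans step1).
have -> : 4 * (M - h x) / dl * n = n / r * (2 * (M - h x)).
  by rewrite /r; field; apply: lt0r_neq0.
by apply: ler_wpM2r.
Qed.

Lemma conv_lip (h : U -> R) x dl M : 0 < dl -> convex_on_ball h x dl ->
  (forall y, `|y - x| < dl -> h y <= M) ->
  forall y1 y2, `|y1 - x| < dl / 2 -> `|y2 - x| < dl / 2 ->
  `|h y1 - h y2| <= 4 * (M - h x) / dl * `|y1 - y2|.
Proof.
move=> dl0 Hc HM y1 y2 y1x y2x.
have := @conv_lip1 h x dl M dl0 Hc HM _ _ y1x y2x.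
have := @conv_lip1 h x dl M dl0 Hc HM _ _ y2x y1x.
rewrite (distrC y2 y1) ler_norml => ? ?; apply/andP; split; lra.
Qed.
End B.
Lemma open_ball (R : realType) (U : normedModType R) (N : set U) x :
  open N -> N x -> exists2 d : R, 0 < d & forall y, `|y - x| < d -> N y.
Proof.
move=> oN Nx; have /nbhs_ballP [d d0 Hd] : nbhs x N by move: oN; rewrite openE => /(_ x Nx).
exists d => // y yx; apply: Hd; rewrite -ball_normE /= distrC //.
Qed.

Lemma cont_pt (R : realType) (F : R -> R) a : continuous F ->
  forall e, 0 < e -> exists2 g, 0 < g & forall b, `|b - a| < g -> `|F b - F a| < e.
Proof.
move=> cF e e0.
have := cF a; move/cvgrPdist_lt => /(_ e e0) /nbhs_ballP [g g0 Hg].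
exists g => // b ba; rewrite distrC; apply: Hg; rewrite -ball_normE /= distrC //.
Qed.
Section Sset.
Variables (R : realType) (U : normedModType R) (m : nat).
Implicit Types (g : U -> 'cV[R]_m -> R) (w : 'cV[R]_m).

Definition Sset g w u := [set r : R | 0 <= r /\ g u (r *: w) <= 0].

Lemma Scomb g w u1 u2 r1 r2 (t : R) : jointly_convex g ->
  Sset g w u1 r1 -> Sset g w u2 r2 -> 0 <= t <= 1 ->
  Sset g w (t *: u1 + (1 - t) *: u2) (t * r1 + (1 - t) * r2).
Proof.
move=> Hc [r10 g1] [r20 g2] /andP[t0 t1]; split.
  by apply: addr_ge0; apply: mulr_ge0 => //; lra.
have := Hc u1 u2 (r1 *: w) (r2 *: w) t (introT andP (conj t0 t1)).
rewrite !scalerA -scalerDl => H; apply: (le_trans H).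
have : 0 <= 1 - t by lra.
nra.
Qed.

Arguments Scomb {g w u1 u2 r1 r2 t}.

Lemma scale_same (u : U) (t : R) : t *: u + (1 - t) *: u = u.
Proof. by rewrite -scalerDl addrC subrK scale1r. Qed.

Lemma Sint g w u r s : jointly_convex g -> Sset g w u 0 -> Sset g w u s ->
  0 <= r <= s -> Sset g w u r.
Proof.
move=> Hc S0 Ss /andP[r0 rs].
have [s0|s0] := eqVneq s 0.
  have -> : r = 0 by rewrite s0 in rs; lra.
  exact: S0.
have sp : 0 < s by case: Ss => ? _; rewrite lt_def s0.
have t01 : 0 <= r / s <= 1.
  by apply/andP; split; [apply: divr_ge0 => //; exact: ltW|rewrite ler_pdivrMr // mul1r].
have := Scomb Hc Ss S0 t01.
rewrite scale_same mulr0 addr0 divfK //.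
Qed.
Arguments Sint {g w u r s}.

Lemma small_step (e c K0 W : R) : 0 < e -> 0 < c -> 0 <= W ->
  exists2 r, 0 < r & forall s, 0 <= s -> s <= r -> s * W < e /\ K0 * (s * W) < c.
Proof.
move=> e0 c0 W0.
set mn := Num.min e c.
have mn0 : 0 < mn by rewrite lt_min e0 c0.
have mne : mn <= e by rewrite ge_min lexx.
have mnc : mn <= c by rewrite ge_min lexx orbT.
have k0 : 0 < `|K0| + 1 by move: (normr_ge0 K0) => ?; lra.
exists (mn / ((`|K0| + 1) * (W + 1))).
  by apply: divr_gt0 => //; apply: mulr_gt0 => //; lra.
move=> s s0 sr.
have H1 : s * W <= mn / ((`|K0| + 1) * (W + 1)) * W by apply: ler_wpM2r.
have E : mn / ((`|K0| + 1) * (W + 1)) * (W + 1) = mn / (`|K0| + 1).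
  by field; apply/andP; split; apply: lt0r_neq0; lra.
have H2 : mn / ((`|K0| + 1) * (W + 1)) * W < mn / (`|K0| + 1).
  rewrite -E ltr_pM2l; first lra.
  by apply: divr_gt0 => //; apply: mulr_gt0 => //; lra.
have H3 : mn / (`|K0| + 1) <= mn by rewrite ler_pdivrMr // ler_peMr //; move: (normr_ge0 K0) => ?; lra.
have sW0 : 0 <= s * W by apply: mulr_ge0.
split; first lra.
have H4 : K0 * (s * W) <= `|K0| * (s * W) by apply: ler_wpM2r => //; exact: ler_norm.
have H5 : `|K0| * (s * W) <= `|K0| * (mn / (`|K0| + 1)) by apply: ler_wpM2l => //; lra.
have H6 : `|K0| * (mn / (`|K0| + 1)) < mn.
  rewrite mulrA ltr_pdivrMr //; move: (normr_ge0 K0) => ?; nra.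
lra.
Qed.

Lemma Sclosed g w u (b : R) : locally_lipschitz2 g -> Sset g w u 0 ->
  (forall r, Sset g w u r -> r <= b) -> Sset g w u (sup (Sset g w u)).
Proof.
move=> Hll S0 Sb.
have hs : has_sup (Sset g w u) by split; [exists 0|exists b].
have rho0 : 0 <= sup (Sset g w u) by apply: ub_le_sup hs.2 _ S0.
split => //; rewrite leNgt; apply/negP => cpos.
set rho := sup (Sset g w u) in rho0 cpos *.
have [e e0 [K0 HK]] := Hll u (rho *: w).
have [r r0 Hr] := @small_step e _ K0 _ e0 cpos (normr_ge0 w).
have [s Ss Hs] := sup_adherent r0 hs.
have srho : s <= rho by apply: ub_le_sup hs.2 _ Ss.
have [Hs1 Hs2] := Hr (rho - s) ltac:(lra) ltac:(rewrite -/rho in Hs; lra).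
have uu : `|u - u| < e by rewrite subrr normr0.
have rr : `|rho *: w - rho *: w| < e by rewrite subrr normr0.
have nsw : `|s *: w - rho *: w| = (rho - s) * `|w|.
  by rewrite -scalerBl normrZ distrC ger0_norm //; lra.
have sr : `|s *: w - rho *: w| < e by rewrite nsw.
have := HK u u (s *: w) (rho *: w) uu uu sr rr.
rewrite subrr normr0 add0r nsw => H.
case: Ss => _ gs.
move: H; rewrite ler_norml => /andP[H _].
lra.
Qed.

Lemma Spos g w u : locally_lipschitz2 g -> g u 0 < 0 -> exists2 r : R, 0 < r & Sset g w u r.
Proof.
move=> Hll gu0.
have [e e0 [K0 HK]] := Hll u 0.
have c0 : 0 < - g u 0 by lra.
have [r r0 Hr] := @small_step e _ K0 _ e0 c0 (normr_ge0 w).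
exists r => //; split; first exact: ltW.
have [Hs1 Hs2] := Hr r (ltW r0) (lexx r).
have uu : `|u - u| < e by rewrite subrr normr0.
have z0 : `|(0 : 'cV[R]_m) - 0| < e by rewrite subrr normr0.
have zr : `|r *: w - 0| < e by rewrite subr0 normrZ gtr0_norm.
have := HK u u (r *: w) 0 uu uu zr z0.
rewrite subrr normr0 add0r subr0 normrZ gtr0_norm // ler_norml => /andP[_ H].
lra.
Qed.
End Sset.

Lemma ball_conv (R : realType) (U : normedModType R) (x y1 y2 : U) (dl t : R) :
  `|y1 - x| < dl -> `|y2 - x| < dl -> 0 <= t <= 1 ->
  `|t *: y1 + (1 - t) *: y2 - x| < dl.
Proof.
move=> h1 h2 /andP[t0 t1].
have -> : t *: y1 + (1 - t) *: y2 - x = t *: (y1 - x) + (1 - t) *: (y2 - x).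
  by rewrite !scalerBr addrACA -opprD -scalerDl [t + _]addrC subrK scale1r.
apply: (le_lt_trans (ler_normD _ _)); rewrite !normrZ !ger0_norm //; last lra.
have [->|tp] := eqVneq t 0.
  by rewrite mul0r add0r subr0 mul1r.
have t0' : 0 < t by rewrite lt_def tp.
have : t * `|y1 - x| < t * dl by rewrite ltr_pM2l.
have : (1 - t) * `|y2 - x| <= (1 - t) * dl by apply: ler_wpM2l; [lra|exact: ltW].
lra.
Qed.

Theorem lemma2p2 (R : realType) (U : completeNormedModType R) (m : nat)
  (Sigma L : 'M[R]_m) (g : U -> 'cV[R]_m -> R) (ubar : U) (N : set U) :
  reflexive_space U -> separable_space U ->
  Sigma = L *m L^T ->
  locally_lipschitz2 g -> jointly_convex g ->
  g ubar 0 < 0 ->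
  bounded_set [set z : 'cV[R]_m | g ubar z <= 0] ->
  open N -> N ubar -> (forall u, N u -> g u 0 < 0) ->
  forall v : 'cV[R]_m, unit_sphere v ->
    clarke_regular_on (fun u => - radial_prob L g u v) N.
Proof.
move=> _ _ _ Hll Hcv _ _ oN _ HN v _ x Nx.
set w := L *m v.
set S := Sset R U m g w.
have [dl dl0 Bd] := @open_ball R U N x oN Nx.
have S0 : forall y, `|y - x| < dl -> S y 0.
  move=> y yx; split => //; rewrite scale0r; exact/ltW/HN/Bd.
set Z := fine (\int[lebesgue_measure]_(r in [set r : R | 0 <= r]) (chi_density m r)%:E).
set c := Z^-1.
have c0 : 0 <= c.
  rewrite invr_ge0; apply: fine_ge0; apply: integral_ge0 => r /= r0.
  rewrite lee_fin /chi_density; apply: mulr_ge0; [exact: exprn_ge0|exact: expR_ge0].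
have t01 : 0 <= (1 / 2 : R) <= 1 by rewrite divr_ge0 //= ler_pdivrMr // mul1r ler1n.
case: (pselect (exists b, forall r, S x r -> r <= b)) => [[b Hb]|nb].
- have Sb : forall y, `|y - x| < dl -> forall r, S y r -> r <= 2 * b.
    move=> y yx r Sr.
    have y2x : `|x + (x - y) - x| < dl by rewrite addrC addKr distrC.
    have := @Scomb R U m g w y _ r 0 (1 / 2) Hcv Sr (S0 _ y2x) t01.
    rewrite vec_mid mulr0 addr0 => /Hb; lra.
  set rho := fun y => sup (S y).
  have rhoS : forall y, `|y - x| < dl -> S y (rho y).
    by move=> y yx; apply: (@Sclosed R U m g w y (2 * b) Hll (S0 _ yx) (Sb _ yx)).
  have rho_ub : forall y, `|y - x| < dl -> forall r, S y r -> r <= rho y.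
    by move=> y yx r Sr; apply: (ub_le_sup (ex_intro _ (2 * b) (Sb _ yx))).
  have rho0 : forall y, `|y - x| < dl -> 0 <= rho y.
    by move=> y yx; apply: rho_ub yx _ (S0 _ yx).
  have xx : `|x - x| < dl by rewrite subrr normr0.
  have rhox0 : 0 < rho x.
    have [r r0 Sr] := @Spos R U m g w x Hll (HN _ Nx).
    exact: lt_le_trans r0 (rho_ub _ xx _ Sr).
  have SE : forall y, `|y - x| < dl -> S y `&` [set r | 0 <= r] = [set` `[0, rho y]].
    move=> y yx; apply/seteqP; split => r /=.
      move=> [[r0 gr] _]; rewrite in_itv /= r0 /=.
      by apply: rho_ub yx _ _; split.
    rewrite in_itv /= => /andP[r0 rr]; split => //.
    apply: (@Sint R U m g w y r (rho y) Hcv (S0 _ yx) (rhoS _ yx)).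
    by apply/andP.
  have fE : forall y, `|y - x| < dl -> - radial_prob L g y v = - (Gf R m (rho y) * c).
    move=> y yx; have -> : radial_prob L g y v = chi_prob m (S y) by [].
    by rewrite /chi_prob (SE y yx).
  have hconv : convex_on_ball R U (fun y => - rho y) x dl.
    move=> y1 y2 t y1x y2x t01'.
    have := @Scomb R U m g w y1 y2 (rho y1) (rho y2) t Hcv (rhoS _ y1x) (rhoS _ y2x) t01'.
    move/(rho_ub _ (@ball_conv R U x y1 y2 dl t y1x y2x t01')); lra.
  have hle : forall y, `|y - x| < dl -> - rho y <= 0.
    by move=> y yx; have := rho0 y yx; lra.
  have Hlip := @conv_lip R U (fun y => - rho y) x dl 0 dl0 hconv hle.
  apply: (@clarke_comp R U _ (fun y => - rho y) (fun s => - (Gf R m (- s) * c))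
     (fun s => chi_density m (- s) * c) x (dl / 2) (rho x / 2)
     (4 * (0 - - rho x) / dl)).
  + lra.
  + lra.
  + by apply: divr_ge0; lra.
  + move=> y yx /=; rewrite opprK; apply: fE; lra.
  + move=> y1 y2 t y1x y2x; apply: hconv; lra.
  + exact: Hlip.
  + move=> a b' ha hb /=.
    move: ha hb; rewrite !ltr_distl => /andP[ha1 ha2] /andP[hb1 hb2].
    have [ab|ba] := leP a b'.
    * have [c' /andP[c1 c2] E] := @Gf_mvt R m (- b') (- a) ltac:(lra) ltac:(lra).
      exists (- c'); split; first by left; apply/andP; split; lra.
      rewrite !opprK.
      have -> : - (Gf R m (- b') * c) + Gf R m (- a) * c = (Gf R m (- a) - Gf R m (- b')) * c by ring.
      rewrite E; ring.
    * have [c' /andP[c1 c2] E] := @Gf_mvt R m (- a) (- b') ltac:(lra) ltac:(lra).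
      exists (- c'); split; first by right; apply/andP; split; lra.
      rewrite !opprK.
      have -> : - (Gf R m (- b') * c) + Gf R m (- a) * c = - ((Gf R m (- b') - Gf R m (- a)) * c) by ring.
      rewrite E; ring.
  + move=> e e0 /=.
    have ce : 0 < e / (c + 1) by apply: divr_gt0; lra.
    have [gm gm0 Hg] := @cont_pt R (chi_density m) (rho x) (@chi_density_cont R m) _ ce.
    exists gm => // xi hxi.
    have -> : chi_density m (- xi) * c - chi_density m (- - rho x) * c =
      (chi_density m (- xi) - chi_density m (rho x)) * c by rewrite opprK; ring.
    have hh : `|- xi - rho x| < gm.
      by move: hxi; rewrite opprK => hxi; rewrite -opprD normrN.
    have H := Hg _ hh.
    rewrite normrM (ger0_norm c0).
    apply: (@le_lt_trans _ _ (e / (c + 1) * c)); first by apply: ler_wpM2r => //; exact: ltW.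
    rewrite mulrAC ltr_pdivrMr; last lra.
    nra.
  + rewrite /= opprK; apply: mulr_ge0 => //.
    rewrite /chi_density; apply: mulr_ge0; [apply: exprn_ge0; exact: ltW|exact: expR_ge0].
- have Sall : forall y, `|y - x| < dl / 2 -> S y = [set r | 0 <= r].
    move=> y yx; have yx' : `|y - x| < dl by lra.
    apply/seteqP; split => r; first by case.
    move=> /= r0.
    have [s Ss rs] : exists2 s, S x s & 2 * r < s.
      apply: contra_notP nb => H; exists (2 * r) => s Ss; rewrite leNgt; apply/negP => ?.
      by apply: H; exists s.
    set y2 := y + (y - x).
    have y2x : `|y2 - x| < dl.
      have -> : y2 - x = (y - x) + (y - x) by rewrite /y2 -!addrA; congr (_ + _); exact: addrCA.
      by apply: (le_lt_trans (ler_normD _ _)); lra.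
    have := @Scomb R U m g w x y2 s 0 (1 / 2) Hcv Ss (S0 _ y2x) t01.
    rewrite vec_mid mulr0 addr0 => Sy.
    apply: (@Sint R U m g w y r (1 / 2 * s) Hcv (S0 _ yx') Sy).
    have : 0 <= r by []; move=> ?; apply/andP; split => //; lra.
  apply: (@clarke_comp R U _ (fun _ => 0) (fun _ => - chi_prob m [set r | 0 <= r]) (fun _ => 0) x (dl / 2) 1 0).
  + lra.
  + lra.
  + lra.
  + move=> y yx /=; have -> : radial_prob L g y v = chi_prob m (S y) by [].
    by rewrite Sall.
  + move=> *; lra.
  + by move=> *; rewrite subrr normr0 mul0r.
  + move=> a b _ _; exists a; split; last by rewrite subrr mul0r.
    by have [ab|ba] := leP a b; [left|right]; rewrite lexx ?ab // ltW.
  + by move=> e e0; exists 1 => // *; rewrite subrr normr0.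
  + exact: lexx.
Qed.
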